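(* Let $\mathcal C$ be an additive strict symmetric ribbon category and $(L,\ell)$ a Lie algebra in $\mathcal C$ whose Killing form $\kappa$ is non-degenerate. If $(K,e,r)$ is an Abelian retract ideal of $L$ (i.e. a retract ideal with $\ell\circ(e\otimes e)=0$), then $e=0$, i.e. $K$ is the zero object.
   Context: $\mathcal C$ is additive, strict monoidal, with symmetric braiding $c$, rigid, with twist $\theta$, right duality $b_U:\mathbf 1\to U\otimes U^\vee$, $d_U$, left duality $\tilde b_U$, $\tilde d_U:U\otimes{}^\vee U\to\mathbf 1$, and the induced sovereign structure $\sigma_U:U^\vee\to{}^\vee U$. A Lie algebra is $(L,\ell)$ with $\ell\circ(\mathrm{id}+c_{L,L})=0$ and $\ell^{(3)}\circ[\mathrm{id}+c_{L\otimes L,L}+(c_{L\otimes L,L})^2]=0$, $\ell^{(3)}:=\ell\circ(\mathrm{id}_L\otimes\ell)$. Killing form: $\kappa:=\tilde d_L\circ([\theta_L\circ\ell^{(3)}]\otimes\sigma_L)\circ(\mathrm{id}_{L\otimes L}\otimes b_L)\in\mathrm{Hom}(L\otimes L,\mathbf 1)$. A pairing $\varpi\in\mathrm{Hom}(U\otimes U,\mathbf 1)$ is non-degenerate iff there is $\varpi^-\in\mathrm{Hom}(\mathbf 1,U\otimes U)$ with $(\varpi\otimes\mathrm{id}_U)\circ(\mathrm{id}_U\otimes\varpi^-)=\mathrm{id}_U=(\mathrm{id}_U\otimes\varpi)\circ(\varpi^-\otimes\mathrm{id}_U)$. A retract of $L$ is $(K,e,r)$ with $r\circ e=\mathrm{id}_K$;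 with $p=e\circ r$, it is a retract ideal iff $\ell\circ(e\otimes\mathrm{id}_L)=p\circ\ell\circ(e\otimes\mathrm{id}_L)$. *)

(* Defs.v *)
From HB Require Import structures.
From mathcomp Require Import all_boot all_algebra.
Set Implicit Arguments. Unset Strict Implicit. Unset Printing Implicit Defensive.
Import GRing.Theory.
Local Open Scope ring_scope.

(* Data of a (strict) monoidal category with abelian-group hom-sets, a braiding,
   a twist, right duals (U^vee, b_U : 1 -> U (x) U^vee, d_U : U^vee (x) U -> 1)
   and left duals (^vee U, bt_U : 1 -> ^vee U (x) U, dt_U : U (x) ^vee U -> 1).
   Strictness: the associativity / unit equalities hold as (Leibniz) equalities
   of objects; morphisms are transported along them with [eqH]. *)
Record CatData := {
  Obj : Type;
  Mor : Obj -> Obj -> zmodType;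
  idm : forall A, Mor A A;
  mcomp : forall A B D, Mor B D -> Mor A B -> Mor A D;
  tensO : Obj -> Obj -> Obj;
  unitO : Obj;
  tensM : forall A A' B B', Mor A A' -> Mor B B' -> Mor (tensO A B) (tensO A' B');
  assocO : forall A B D, tensO (tensO A B) D = tensO A (tensO B D);
  lunitO : forall A, tensO unitO A = A;
  runitO : forall A, tensO A unitO = A;
  braid : forall A B, Mor (tensO A B) (tensO B A);
  twist : forall A, Mor A A;
  rdual : Obj -> Obj;
  rcoev : forall A, Mor unitO (tensO A (rdual A));
  rdev : forall A, Mor (tensO (rdual A) A) unitO;
  ldual : Obj -> Obj;
  lcoev : forall A, Mor unitO (tensO (ldual A) A);
  ldev : forall A, Mor (tensO A (ldual A)) unitO
}.

Arguments Mor : clear implicits.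
Arguments idm {_} _.
Arguments mcomp {_ _ _ _} _ _.
Arguments tensO {_} _ _.
Arguments unitO {_}.
Arguments tensM {_ _ _ _ _} _ _.
Arguments assocO {_} _ _ _.
Arguments lunitO {_} _.
Arguments runitO {_} _.
Arguments braid {_} _ _.
Arguments twist {_} _.
Arguments rdual {_} _.
Arguments rcoev {_} _.
Arguments rdev {_} _.
Arguments ldual {_} _.
Arguments lcoev {_} _.
Arguments ldev {_} _.

Definition eqH {C : CatData} {A B : Obj C} (e : A = B) : Mor C A B :=
  match e in _ = X return Mor C A X with erefl => idm A end.

Local Notation "g ** f" := (mcomp g f) (at level 40, left associativity).
Local Notation "f <x> g" := (tensM f g) (at level 38).
Local Notation "A (x) B" := (tensO A B) (at level 34).

Section CatDefs.
Variable C : CatData.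
Implicit Types A B D : Obj C.

Definition is_category : Prop :=
  [/\ forall A B (f : Mor C A B), idm B ** f = f,
      forall A B (f : Mor C A B), f ** idm A = f &
      forall A B D E (f : Mor C A B) (g : Mor C B D) (h : Mor C D E),
        h ** (g ** f) = (h ** g) ** f].

Definition is_additive : Prop :=
  [/\ is_category,
      (forall A B D (g : Mor C B D) (f1 f2 : Mor C A B), g ** (f1 + f2) = g ** f1 + g ** f2),
      (forall A B D (g1 g2 : Mor C B D) (f : Mor C A B), (g1 + g2) ** f = g1 ** f + g2 ** f),
      (exists Z : Obj C, idm Z = 0) &
      (forall A B, exists (S : Obj C) (i1 : Mor C A S) (i2 : Mor C B S)
                          (p1 : Mor C S A) (p2 : Mor C S B),
          [/\ p1 ** i1 = idm A, p2 ** i2 = idm B, p1 ** i2 = 0, p2 ** i1 = 0 &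
              i1 ** p1 + i2 ** p2 = idm S])].

Definition is_strict_monoidal : Prop :=
  (forall A B, idm A <x> idm B = idm (A (x) B)) /\
      (forall A1 A2 A3 B1 B2 B3 (f : Mor C A1 A2) (g : Mor C A2 A3)
              (f' : Mor C B1 B2) (g' : Mor C B2 B3),
          (g ** f) <x> (g' ** f') = (g <x> g') ** (f <x> f')) /\
      (forall A A' B B' (f1 f2 : Mor C A A') (g : Mor C B B'),
          (f1 + f2) <x> g = f1 <x> g + f2 <x> g) /\
      (forall A A' B B' (f : Mor C A A') (g1 g2 : Mor C B B'),
          f <x> (g1 + g2) = f <x> g1 + f <x> g2) /\
      (forall A A' B B' D D' (f : Mor C A A') (g : Mor C B B') (h : Mor C D D'),
          (f <x> (g <x> h)) ** eqH (assocO A B D) = eqH (assocO A' B' D') ** ((f <x> g) <x> h)) /\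
      (forall A A' (f : Mor C A A'),
          f ** eqH (lunitO A) = eqH (lunitO A') ** (idm unitO <x> f)) /\
      (forall A A' (f : Mor C A A'),
          f ** eqH (runitO A) = eqH (runitO A') ** (f <x> idm unitO)).

Definition is_symmetric_braiding : Prop :=
  [/\ (forall A A' B B' (f : Mor C A A') (g : Mor C B B'),
          braid A' B' ** (f <x> g) = (g <x> f) ** braid A B),
      (forall A B, braid B A ** braid A B = idm (A (x) B)),
      (forall A B D,
          eqH (assocO B D A) ** braid A (B (x) D) =
          (idm B <x> braid A D) ** eqH (assocO B A D) ** (braid A B <x> idm D)
            ** eqH (esym (assocO A B D))) &
      (forall A B D,
          braid (A (x) B) D =
          eqH (assocO D A B) ** (braid A D <x> idm B) ** eqH (esym (assocO A D B))
            ** (idm A <x> braid B D) ** eqH (assocO A B D))].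

Definition is_rigid : Prop :=
  [/\ (forall A, eqH (runitO A) ** (idm A <x> rdev A) ** eqH (assocO A (rdual A) A)
                   ** (rcoev A <x> idm A) ** eqH (esym (lunitO A)) = idm A),
      (forall A, eqH (lunitO (rdual A)) ** (rdev A <x> idm (rdual A))
                   ** eqH (esym (assocO (rdual A) A (rdual A)))
                   ** (idm (rdual A) <x> rcoev A) ** eqH (esym (runitO (rdual A)))
                 = idm (rdual A)),
      (forall A, eqH (lunitO A) ** (ldev A <x> idm A) ** eqH (esym (assocO A (ldual A) A))
                   ** (idm A <x> lcoev A) ** eqH (esym (runitO A)) = idm A) &
      (forall A, eqH (runitO (ldual A)) ** (idm (ldual A) <x> ldev A)
                   ** eqH (assocO (ldual A) A (ldual A))
                   ** (lcoev A <x> idm (ldual A)) ** eqH (esym (lunitO (ldual A)))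
                 = idm (ldual A))].

Definition rdualM A B (f : Mor C A B) : Mor C (rdual B) (rdual A) :=
  eqH (lunitO (rdual A)) ** (rdev B <x> idm (rdual A))
    ** eqH (esym (assocO (rdual B) B (rdual A)))
    ** (idm (rdual B) <x> (f <x> idm (rdual A)))
    ** (idm (rdual B) <x> rcoev A) ** eqH (esym (runitO (rdual B))).

Definition is_twist : Prop :=
  [/\ (forall A B (f : Mor C A B), twist B ** f = f ** twist A),
      (forall A, exists g : Mor C A A, g ** twist A = idm A /\ twist A ** g = idm A),
      (forall A B, twist (A (x) B) = (twist A <x> twist B) ** braid B A ** braid A B) &
      (forall A, twist (rdual A) = rdualM (twist A))].

Definition is_additive_strict_symmetric_ribbon : Prop :=
  [/\ is_additive, is_strict_monoidal, is_symmetric_braiding, is_rigid & is_twist].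

(* The sovereign structure sigma_U : U^vee -> ^vee U induced by the ribbon
   structure (Turaev's convention): the mate, w.r.t. the left duality, of
   d_U o c_{U,U^vee} o (theta_U (x) id) : U (x) U^vee -> 1. *)
Definition sovereign A : Mor C (rdual A) (ldual A) :=
  eqH (runitO (ldual A))
    ** (idm (ldual A) <x> (rdev A ** braid A (rdual A) ** (twist A <x> idm (rdual A))))
    ** eqH (assocO (ldual A) A (rdual A))
    ** (lcoev A <x> idm (rdual A)) ** eqH (esym (lunitO (rdual A))).

Definition lie3 (L : Obj C) (l : Mor C (L (x) L) L) : Mor C (L (x) (L (x) L)) L :=
  l ** (idm L <x> l).

(* c_{L (x) L, L} seen as an endomorphism of L (x) L (x) L (strictness) *)
Definition cyc (L : Obj C) : Mor C (L (x) (L (x) L)) (L (x) (L (x) L)) :=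
  braid (L (x) L) L ** eqH (esym (assocO L L L)).

Definition is_Lie (L : Obj C) (l : Mor C (L (x) L) L) : Prop :=
  l ** (idm (L (x) L) + braid L L) = 0 /\
  lie3 l ** (idm (L (x) (L (x) L)) + cyc L + cyc L ** cyc L) = 0.

Definition killing (L : Obj C) (l : Mor C (L (x) L) L) : Mor C (L (x) L) unitO :=
  ldev L
    ** ((twist L ** lie3 l ** eqH (assocO L L L)) <x> sovereign L)
    ** eqH (esym (assocO (L (x) L) L (rdual L)))
    ** (idm (L (x) L) <x> rcoev L) ** eqH (esym (runitO (L (x) L))).

Definition nondeg_pairing (U : Obj C) (w : Mor C (U (x) U) unitO) : Prop :=
  exists wm : Mor C unitO (U (x) U),
    eqH (lunitO U) ** (w <x> idm U) ** eqH (esym (assocO U U U))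
      ** (idm U <x> wm) ** eqH (esym (runitO U)) = idm U /\
    eqH (runitO U) ** (idm U <x> w) ** eqH (assocO U U U)
      ** (wm <x> idm U) ** eqH (esym (lunitO U)) = idm U.

Definition is_retract (L K : Obj C) (e : Mor C K L) (r : Mor C L K) : Prop :=
  r ** e = idm K.

Definition is_retract_ideal (L : Obj C) (l : Mor C (L (x) L) L)
    (K : Obj C) (e : Mor C K L) (r : Mor C L K) : Prop :=
  is_retract e r /\ l ** (e <x> idm L) = (e ** r) ** l ** (e <x> idm L).

End CatDefs.

(* Main.v *)
Require Import Defs.
From HB Require Import structures.
From mathcomp Require Import all_boot all_algebra.
From Stdlib Require Import ProofIrrelevance.
Set Implicit Arguments. Unset Strict Implicit. Unset Printing Implicit Defensive.
Import GRing.Theory.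
Local Open Scope ring_scope.

Local Notation "g ** f" := (mcomp g f) (at level 40, left associativity).
Local Notation "f <x> g" := (tensM f g) (at level 38).
Local Notation "A (x) B" := (tensO A B) (at level 34).

Section S.
Variable C : CatData.
Implicit Types A B D : Obj C.
Local Notation M := (Mor C).
Hypothesis idl : forall A B (f : M A B), idm B ** f = f.
Hypothesis idr : forall A B (f : M A B), f ** idm A = f.
Hypothesis mcA : forall A B D E (f : M A B) (g : M B D) (h : M D E),
        h ** (g ** f) = (h ** g) ** f.
Hypothesis cDr : forall A B D (g : M B D) (f1 f2 : M A B), g ** (f1 + f2) = g ** f1 + g ** f2.
Hypothesis cDl : forall A B D (g1 g2 : M B D) (f : M A B), (g1 + g2) ** f = g1 ** f + g2 ** f.
Hypothesis tid : forall A B, idm A <x> idm B = idm (A (x) B).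
Hypothesis tMM : forall A1 A2 A3 B1 B2 B3 (f : M A1 A2) (g : M A2 A3)
              (f' : M B1 B2) (g' : M B2 B3),
          (g ** f) <x> (g' ** f') = (g <x> g') ** (f <x> f').
Hypothesis tDl : forall A A' B B' (f1 f2 : M A A') (g : M B B'),
          (f1 + f2) <x> g = f1 <x> g + f2 <x> g.
Hypothesis tDr : forall A A' B B' (f : M A A') (g1 g2 : M B B'),
          f <x> (g1 + g2) = f <x> g1 + f <x> g2.
Hypothesis anat : forall A A' B B' D D' (f : M A A') (g : M B B') (h : M D D'),
          (f <x> (g <x> h)) ** eqH (assocO A B D) = eqH (assocO A' B' D') ** ((f <x> g) <x> h).
Hypothesis lnat : forall A A' (f : M A A'),
          f ** eqH (lunitO A) = eqH (lunitO A') ** (idm unitO <x> f).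
Hypothesis rnat : forall A A' (f : M A A'),
          f ** eqH (runitO A) = eqH (runitO A') ** (f <x> idm unitO).

Lemma eqH_irr A B (e e' : A = B) : eqH e = eqH e'.
Proof. by rewrite (proof_irrelevance _ e e'). Qed.
Lemma eqH_refl A (e : A = A) : eqH e = idm A.
Proof. by rewrite (proof_irrelevance _ e erefl). Qed.
Lemma eqHH A B D (e1 : B = D) (e2 : A = B) (e3 : A = D) : eqH e1 ** eqH e2 = eqH e3.
Proof. destruct e2; destruct e1; simpl; by rewrite !eqH_refl idl. Qed.
Lemma eqHl A B B' (e : B = B') (e3 : A (x) B = A (x) B') : idm A <x> eqH e = eqH e3.
Proof. destruct e; by rewrite !eqH_refl tid. Qed.
Lemma eqHr A B B' (e : B = B') (e3 : B (x) A = B' (x) A) : eqH e <x> idm A = eqH e3.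
Proof. destruct e; by rewrite !eqH_refl tid. Qed.
Lemma eqHT A A' B B' (e : A = A') (e' : B = B') (e3 : A (x) B = A' (x) B') : eqH e <x> eqH e' = eqH e3.
Proof. destruct e; simpl; exact: eqHl. Qed.
Lemma eqHHk X A B D (e1 : B = D) (e2 : A = B) (e3 : A = D) (k : M D X) :
  k ** eqH e1 ** eqH e2 = k ** eqH e3.
Proof. by rewrite -mcA eqHH. Qed.

Lemma natV A A' B B' (e : A = A') (e' : B = B') (X : M A' B') (Y : M A B) :
  X ** eqH e = eqH e' ** Y -> Y ** eqH (esym e) = eqH (esym e') ** X.
Proof.
move=> H.
have -> : Y = eqH (esym e') ** X ** eqH e.
  by rewrite -mcA H mcA eqHH eqH_refl idl.
by rewrite -!mcA eqHH eqH_refl idr.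
Qed.

Lemma ainat A A' B B' D D' (f : M A A') (g : M B B') (h : M D D') :
  ((f <x> g) <x> h) ** eqH (esym (assocO A B D)) = eqH (esym (assocO A' B' D')) ** (f <x> (g <x> h)).
Proof. exact: natV (anat _ _ _). Qed.
Lemma linat A A' (f : M A A') :
  (idm unitO <x> f) ** eqH (esym (lunitO A)) = eqH (esym (lunitO A')) ** f.
Proof. exact: natV (lnat _). Qed.
Lemma rinat A A' (f : M A A') :
  (f <x> idm unitO) ** eqH (esym (runitO A)) = eqH (esym (runitO A')) ** f.
Proof. exact: natV (rnat _). Qed.

Lemma c0r A B D (g : M B D) : g ** (0 : M A B) = 0.
Proof. by apply: (addrI (g ** 0)); rewrite -cDr !addr0. Qed.
Lemma c0l A B D (f : M A B) : (0 : M B D) ** f = 0.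
Proof. by apply: (addrI (0 ** f)); rewrite -cDl !addr0. Qed.
Lemma cNl A B D (g : M B D) (f : M A B) : (- g) ** f = - (g ** f).
Proof. by apply: (addrI (g ** f)); rewrite -cDl !subrr c0l. Qed.
Lemma cNr A B D (g : M B D) (f : M A B) : g ** (- f) = - (g ** f).
Proof. by apply: (addrI (g ** f)); rewrite -cDr !subrr c0r. Qed.
Lemma t0l A A' B B' (g : M B B') : (0 : M A A') <x> g = 0.
Proof. by apply: (addrI (0 <x> g)); rewrite -tDl !addr0. Qed.
Lemma t0r A A' B B' (f : M A A') : f <x> (0 : M B B') = 0.
Proof. by apply: (addrI (f <x> 0)); rewrite -tDr !addr0. Qed.
Lemma tL A A' B B' (f : M A A') (g : M B B') : f <x> g = (f <x> idm B') ** (idm A <x> g).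
Proof. by rewrite -tMM idl idr. Qed.
Lemma tR A A' B B' (f : M A A') (g : M B B') : f <x> g = (idm A' <x> g) ** (f <x> idm B).
Proof. by rewrite -tMM idl idr. Qed.
Lemma scal A B (f : M A unitO) (g : M B unitO) :
  f ** eqH (runitO A) ** (idm A <x> g) = g ** eqH (lunitO B) ** (f <x> idm B).
Proof.
rewrite rnat lnat -!mcA -!tMM !idl !idr.
by rewrite (eqH_irr (runitO unitO) (lunitO unitO)).
Qed.

Lemma eqH_split A B D (e : A = D) (e1 : A = B) (e2 : B = D) : eqH e = eqH e2 ** eqH e1.
Proof. by rewrite (eqHH e2 e1 e). Qed.
Lemma kL A B B' D E (g : M B D) (f : M A B) (g' : M B' D) (f' : M A B') (k : M D E) :
  g ** f = g' ** f' -> k ** g ** f = k ** g' ** f'.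
Proof. by move=> H; rewrite -!mcA H. Qed.
Lemma tcl A B D E (g : M D E) (f : M B D) : idm A <x> (g ** f) = (idm A <x> g) ** (idm A <x> f).
Proof. by rewrite -tMM idl. Qed.
Lemma tcr A B D E (g : M D E) (f : M B D) : (g ** f) <x> idm A = (g <x> idm A) ** (f <x> idm A).
Proof. by rewrite -tMM idl. Qed.

Lemma eqHm A B D (e1 : B = D) (e2 : A = B) : eqH e1 ** eqH e2 = eqH (etrans e2 e1).
Proof. exact: eqHH. Qed.
Lemma eqHmk X A B D (e1 : B = D) (e2 : A = B) (k : M D X) : k ** eqH e1 ** eqH e2 = k ** eqH (etrans e2 e1).
Proof. exact: eqHHk. Qed.
Lemma eqHl' A B B' (e : B = B') : idm A <x> eqH e = eqH (congr1 (tensO A) e).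
Proof. exact: eqHl. Qed.
Lemma eqHr' A B B' (e : B = B') : eqH e <x> idm A = eqH (congr1 (tensO^~ A) e).
Proof. exact: eqHr. Qed.

Lemma G1 X Y W (dl : M (X (x) Y) unitO) (bt : M unitO (Y (x) X))
  (Z : eqH (lunitO X) ** (dl <x> idm X) ** eqH (esym (assocO X Y X)) ** (idm X <x> bt)
        ** eqH (esym (runitO X)) = idm X)
  (E : M (X (x) W) unitO) :
  dl ** (idm X <x> (eqH (runitO Y) ** (idm Y <x> E) ** eqH (assocO Y X W) ** (bt <x> idm W)
      ** eqH (esym (lunitO W)))) = E.
Proof.
rewrite !tcl !mcA.
rewrite (eqHl _ (etrans (esym (assocO X Y unitO)) (runitO (X (x) Y)))).
rewrite (eqH_split _ (esym (assocO X Y unitO)) (runitO _)).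
rewrite !mcA (kL _ (esym (ainat _ _ _))) tid scal.
rewrite -[idm (X (x) W)]tid.
rewrite (eqH_split _ (etrans (esym (assocO X Y (X (x) W))) (esym (assocO (X (x) Y) X W))) (assocO (X (x) Y) X W)).
rewrite !mcA (kL _ (anat _ _ _)) eqHmk.
rewrite (eqHl _ (etrans (congr1 (tensO^~ W) (esym (runitO X))) (assocO X unitO W))).
rewrite (eqH_split _ (congr1 (tensO^~ W) (esym (runitO X))) (assocO X unitO W)).
rewrite !mcA (kL _ (anat _ _ _)).
rewrite !eqHl' !eqHmk.
rewrite (eqH_irr (etrans _ _) (congr1 (tensO^~ W) (esym (assocO X Y X)))).
rewrite (eqH_irr (etrans (assocO unitO X W) _) (congr1 (tensO^~ W) (lunitO X))).
rewrite -!eqHr'.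
by rewrite -!mcA -!tcr !mcA Z tid idr.
Qed.

Lemma kL1 A B D E (g : M B D) (f : M A B) (h : M A D) (k : M D E) :
  g ** f = h -> k ** g ** f = k ** h.
Proof. by move=> H; rewrite -mcA H. Qed.
Lemma tLR A A' B B' (f : M A A') (g : M B B') : (f <x> idm B') ** (idm A <x> g) = f <x> g.
Proof. by rewrite -tMM idl idr. Qed.
Lemma tRL A A' B B' (f : M A A') (g : M B B') : (idm A' <x> g) ** (f <x> idm B) = f <x> g.
Proof. by rewrite -tMM idl idr. Qed.
Lemma tCr A A' B B' B'' (f : M A A') (g : M B' B'') (h : M B B') : (f <x> g) ** (idm A <x> h) = f <x> (g ** h).
Proof. by rewrite -tMM idr. Qed.
Lemma tCl A A' A'' B B' (f : M A' A'') (g : M B B') (h : M A A') : (f <x> g) ** (h <x> idm B) = (f ** h) <x> g.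
Proof. by rewrite -tMM idr. Qed.

Section Dual.
Variables (X Y : Obj C) (dl : M (Y (x) X) unitO) (bt : M unitO (X (x) Y)).
Hypothesis Z : eqH (runitO X) ** (idm X <x> dl) ** eqH (assocO X Y X) ** (bt <x> idm X)
        ** eqH (esym (lunitO X)) = idm X.
Definition Bs (B : M X X) : M Y Y :=
  eqH (lunitO Y) ** (dl <x> idm Y) ** eqH (esym (assocO Y X Y)) ** (idm Y <x> (B <x> idm Y))
   ** (idm Y <x> bt) ** eqH (esym (runitO Y)).

Lemma G3 (B : M X X) : (B <x> idm Y) ** bt = (idm X <x> Bs B) ** bt.
Proof.
have -> : (B <x> idm Y) ** bt = ((eqH (runitO X) ** (idm X <x> dl) ** eqH (assocO X Y X) ** (bt <x> idm X)
        ** eqH (esym (lunitO X))) <x> idm Y) ** (B <x> idm Y) ** bt by rewrite Z tid idl.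
rewrite /Bs !tcl !tcr ?mcA.
rewrite (eqHr _ (etrans (esym (lunitO (X (x) Y))) (esym (assocO unitO X Y)))).
rewrite (eqH_split _ (esym (lunitO (X (x) Y))) (esym (assocO unitO X Y))).
rewrite ?mcA (kL _ (esym (linat _))) (kL _ (esym (linat _))).
rewrite (kL _ (esym (ainat _ _ _))).
rewrite (kL1 _ (esym (tcr _ _ _))) tLR.
rewrite (kL _ (ainat _ _ _)) (kL1 _ (tCr _ _ _)).
rewrite (eqHl _ (etrans (esym (runitO (X (x) Y))) (assocO X Y unitO))).
rewrite (eqH_split _ (esym (runitO (X (x) Y))) (assocO X Y unitO)).
rewrite ?mcA (kL _ (esym (rinat _))) (kL _ (anat _ _ _)) (kL _ (anat _ _ _)).
rewrite !eqHl' eqHmk.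
rewrite (eqH_split _ (etrans (esym (assocO (X (x) Y) X Y)) (congr1 (tensO^~ Y) (assocO X Y X)))
   (assocO X (Y (x) X) Y)).
rewrite ?mcA (kL _ (anat _ _ _)) eqHm !tid (kL1 _ (esym (tcl _ _ _))) (kL1 _ (tRL _ _)).
rewrite !eqHr' eqHmk.
by rewrite (eqH_irr (congr1 (tensO^~ Y) (runitO X)) (etrans (assocO X unitO Y) (congr1 (tensO X) (lunitO Y))))
  (eqH_irr (esym (lunitO unitO)) (esym (runitO unitO))).
Qed.

Lemma G2' (b' : M unitO (X (x) Y)) :
  dl ** ((eqH (lunitO Y) ** (dl <x> idm Y) ** eqH (esym (assocO Y X Y)) ** (idm Y <x> b')
     ** eqH (esym (runitO Y))) <x> idm X)
  = dl ** (idm Y <x> (eqH (runitO X) ** (idm X <x> dl) ** eqH (assocO X Y X) ** (b' <x> idm X)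
        ** eqH (esym (lunitO X)))).
Proof.
rewrite !tcl !tcr ?mcA.
rewrite (eqHr _ (etrans (assocO unitO Y X) (lunitO (Y (x) X)))).
rewrite (eqH_split _ (assocO unitO Y X) (lunitO (Y (x) X))).
rewrite ?mcA lnat (kL _ (esym (anat _ _ _))) tid (kL1 _ (tRL _ _)).
rewrite -tRL ?mcA -lnat -scal.
rewrite (eqHl _ (etrans (esym (assocO Y X unitO)) (runitO (Y (x) X)))).
rewrite (eqH_split _ (esym (assocO Y X unitO)) (runitO (Y (x) X))).
rewrite ?mcA (kL _ (esym (ainat _ _ _))) tid.
rewrite (eqHl _ (etrans (congr1 (tensO^~ X) (esym (runitO Y))) (assocO Y unitO X))).
rewrite (eqH_split _ (congr1 (tensO^~ X) (esym (runitO Y))) (assocO Y unitO X)).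
rewrite ?mcA (kL _ (anat _ _ _)) !eqHl' !eqHr' !eqHmk.
congr (_ ** _ ** _ ** _ ** _ ** _); apply: eqH_irr.
Qed.

Lemma G2 (B : M X X) : dl ** (Bs B <x> idm X) = dl ** (idm Y <x> B).
Proof.
rewrite /Bs -(mcA _ (idm Y <x> (B <x> idm Y))) -tcl G2'.
congr (_ ** (_ <x> _)).
rewrite tcr ?mcA -(kL _ (anat _ _ _)) tid (kL1 _ (tRL _ _)) -tLR ?mcA -rnat.
by have := congr1 (mcomp B) Z; rewrite idr !mcA.
Qed.
End Dual.

Hypothesis bnat : forall A A' B B' (f : M A A') (g : M B B'),
  braid A' B' ** (f <x> g) = (g <x> f) ** braid A B.
Hypothesis thnat : forall A B (f : M A B), twist B ** f = f ** twist A.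
Hypothesis zz1 : forall A, eqH (runitO A) ** (idm A <x> rdev A) ** eqH (assocO A (rdual A) A)
                   ** (rcoev A <x> idm A) ** eqH (esym (lunitO A)) = idm A.
Hypothesis zz3 : forall A, eqH (lunitO A) ** (ldev A <x> idm A) ** eqH (esym (assocO A (ldual A) A))
                   ** (idm A <x> lcoev A) ** eqH (esym (runitO A)) = idm A.

Section Tr.
Variable L : Obj C.
Definition EE := rdev L ** braid L (rdual L) ** (twist L <x> idm (rdual L)).

Lemma DE : ldev L ** (idm L <x> sovereign L) = EE.
Proof. exact: G1 (zz3 L) EE. Qed.

Lemma Eslide (B : M L L) : EE ** (B <x> idm (rdual L)) = EE ** (idm L <x> rdualM B).
Proof.
rewrite /EE -!mcA -!tcr thnat tcr !mcA (kL _ (bnat _ _)) -(G2 (zz1 L) B).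
rewrite -(kL _ (bnat _ _)) (kL1 _ (tRL _ _)) (kL1 _ (tLR _ _)).
by [].
Qed.

Definition T (X : Obj C) (F : M (X (x) L) L) : M X unitO :=
  ldev L ** (F <x> sovereign L) ** eqH (esym (assocO X L (rdual L)))
    ** (idm X <x> rcoev L) ** eqH (esym (runitO X)).

Lemma TE X (F : M (X (x) L) L) : T F = EE ** (F <x> idm (rdual L)) ** eqH (esym (assocO X L (rdual L)))
    ** (idm X <x> rcoev L) ** eqH (esym (runitO X)).
Proof. by rewrite /T tR mcA DE. Qed.

Lemma Tnat X X' (F : M (X (x) L) L) (g : M X' X) : T F ** g = T (F ** (g <x> idm L)).
Proof.
rewrite !TE -!mcA -rinat ?mcA (kL1 _ (tRL _ _)) -[g <x> rcoev L]tLR -[idm (L (x) rdual L)]tid.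
by rewrite ?mcA -(kL _ (ainat _ _ _)) (kL1 _ (esym (tcr _ _ _))).
Qed.

Lemma Tslide X (B : M L L) (F : M (X (x) L) L) : T (B ** F) = T (F ** (idm X <x> B)).
Proof.
rewrite !TE tcr mcA Eslide ?mcA (kL1 _ (tRL _ _)) -[F <x> rdualM B]tLR -[idm (X (x) L)]tid.
rewrite ?mcA (kL _ (ainat _ _ _)) (kL1 _ (esym (tcl _ _ _))).
rewrite -[(idm L <x> rdualM B) ** rcoev L](G3 (zz1 L) B) tcl ?mcA (kL _ (esym (ainat _ _ _))).
by rewrite (kL1 _ (esym (tcr _ _ _))).
Qed.

Lemma T0 X : T (0 : M (X (x) L) L) = 0.
Proof. by rewrite /T t0l c0r !c0l. Qed.

Variables (l : M (L (x) L) L) (K : Obj C) (e : M K L) (r : M L K).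
Hypothesis anti : l ** (idm (L (x) L) + braid L L) = 0.
Hypothesis Hr : r ** e = idm K.
Hypothesis Hid : l ** (e <x> idm L) = (e ** r) ** l ** (e <x> idm L).
Hypothesis Hab : l ** (e <x> e) = 0.

Lemma Lp1 : l ** ((e ** r) <x> idm L) = (e ** r) ** l ** ((e ** r) <x> idm L).
Proof. by rewrite tcr !mcA -Hid. Qed.

Lemma anti' : l = - (l ** braid L L).
Proof. by apply/eqP; rewrite -addr_eq0 -[X in X + _]idr -cDr anti. Qed.

Lemma Lp : l ** (idm L <x> (e ** r)) = (e ** r) ** l ** (idm L <x> (e ** r)).
Proof.
rewrite {1}anti' cNl -mcA bnat mcA Lp1.
rewrite -!mcA -bnat !mcA.
by rewrite [in RHS]anti' cNr cNl !mcA.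
Qed.

Lemma killE : killing l = T (twist L ** lie3 l ** eqH (assocO L L L)).
Proof. by []. Qed.

Lemma kill0 : killing l ** (idm L <x> e) = 0.
Proof.
rewrite killE Tnat.
set F := (X in T X).
have HG : (idm L <x> l) ** eqH (assocO L L L) ** ((idm L <x> e) <x> idm L)
    = (idm L <x> (l ** (e <x> idm L))) ** eqH (assocO L K L).
  by rewrite -mcA -anat mcA -tcl.
set G := (idm L <x> (l ** (e <x> idm L))) ** eqH (assocO L K L).
have HF : F = twist L ** l ** G.
  by rewrite /F /lie3 /G -HG !mcA.
have HG' : G = (idm L <x> (e ** r)) ** G.
  by rewrite /G [RHS]mcA -tcl [_ ** (l ** _)]mcA -Hid.
have HpF : F = (e ** r) ** F.
  rewrite {1}HF HG' mcA -[twist L ** l ** _]mcA Lp.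
  have Hth : forall Y (y : M Y L), twist L ** ((e ** r) ** y) = (e ** r) ** (twist L ** y).
    by move=> Y y; rewrite mcA thnat -mcA.
  by rewrite -[(e ** r) ** l ** _]mcA Hth HF [in RHS]HG' !mcA.
have HFp : F ** (idm (L (x) K) <x> (e ** r)) = 0.
  rewrite HF /G -[idm (L (x) K)]tid -!mcA -anat !mcA (kL1 _ (esym (tcl _ _ _))).
  rewrite -[l ** (e <x> idm L) ** _]mcA tLR -[e <x> (e ** r)]tCr mcA Hab.
  by rewrite (c0l _ (idm K <x> r)) t0r c0r (c0l _ (eqH (assocO L K L))).
by rewrite HpF Tslide HFp T0.
Qed.

Lemma final (wm : M unitO (L (x) L))
  (Hw : eqH (runitO L) ** (idm L <x> killing l) ** eqH (assocO L L L) ** (wm <x> idm L)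
        ** eqH (esym (lunitO L)) = idm L) : e = 0.
Proof.
rewrite -[e]idl -Hw (kL _ (esym (linat _))) (kL1 _ (tLR _ _)) -[wm <x> e]tRL -[idm (L (x) L)]tid.
rewrite !mcA -(kL _ (anat _ _ _)) (kL1 _ (esym (tcl _ _ _))) kill0 t0r.
by rewrite c0r (c0l _ (eqH (assocO L L K))) (c0l _ (wm <x> idm K)) (c0l _ (eqH (esym (lunitO K)))).
Qed.
End Tr.
End S.
Theorem mainTheorem8 (C : CatData)
  (HC : is_additive_strict_symmetric_ribbon C)
  (L : Obj C) (l : Mor C (tensO L L) L)
  (HL : is_Lie l)
  (Hkappa : nondeg_pairing (killing l))
  (K : Obj C) (e : Mor C K L) (r : Mor C L K)
  (Hideal : is_retract_ideal l e r)
  (Habel : mcomp l (tensM e e) = 0) :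
  e = 0.
Proof.
case: HC => [[[idl idr mcA] cDr cDl _ _] [tid [tMM [tDl [tDr [anat [lnat rnat]]]]]]
  [bnat _ _ _] [zz1 _ zz3 _] [thnat _ _ _]].
case: HL => anti _.
case: Hkappa => wm [_ Hw].
case: Hideal => Hr Hid.
eapply final; eassumption.
Qed.
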